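(* Fix the CE group 0 parameters: $\alpha>2$, $\rho,P,\lambda_B,\gamma_{th}>0$, $\sigma^2\ge0$, $a:=\mathcal{A}_0^1\mathcal{R}_0^1\in(0,1]$, $\lambda_0^a>0$, a repetition number $K_0\in\{1,2\}$, and $c=3.575$. Suppose the following: - Each device (the typical device, indexed $m=0$, and each of the $N_0$ intra-cell interfering devices, indexed $m=1,\dots,N_0$) transmits its preamble $K_0$ times. - Repetition $k$ of device $m$ succeeds (event $\theta_k$) iff all 4 of its symbol-group SINRs are $\ge\gamma_{th}$. - For every set of $k$ repetitions, the joint success probability of device $m$ equals the probability of Lemma 2 with $l=4k$. Explicitly, this probability is $q(4k)$, where $$q(l)=\exp\Big(-\frac{l\gamma_{th}\sigma^2}{\rho}-\frac{2\gamma_{th}^{2/\alpha}a\lambda_0^a\gamma\big(2,\pi\lambda_B(P/\rho)^{2/\alpha}\big)}{\lambda_B\big(1-\exp(-\pi\lambda_B(P/\rho)^{2/\alpha})\big)}\mathcal{F}_0(l)\Big),\qquad \mathcal{F}_0(l)=\int_{\gamma_{th}^{-1/\alpha}}^{\infty}\Big[1-\Big(\frac{1}{1+y^{-\alpha}}\Big)^{l}\Big]y\,dy.$$ - The number $N_0$ of intra-cell interferers has PMF $$\mathbb{P}[N_0=n]=\frac{c^{c+1}\Gamma(n+c+1)(a\lambda_0^a/\lambda_B)^n}{\Gamma(c+1)\Gamma(n+1)(a\lambda_0^a/\lambda_B+c)^{n+c+1}}.$$ Define the preamble transmission success probability of device $m$ as $\mathbb{P}_{S,0,m}[K_0]=\mathbb{P}\big[\bigcup_{k=1}^{K_0}\theta_k\big]$.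 Define the RACH success probability as $$\mathcal{P}_0^1=\sum_{n=0}^{\infty}\mathbb{P}[N_0=n]\,\mathbb{P}_{S,0,0}[K_0]\prod_{m=1}^{n}\big(1-\mathbb{P}_{S,0,m}[K_0]\big).$$ Then $$\mathcal{P}_0^1=\sum_{n=0}^{\infty}\mathbb{P}[N_0=n]\,\Theta_0\,(1-\Theta_0)^{n},\qquad\Theta_0=\sum_{k=1}^{K_0}(-1)^{k+1}\binom{K_0}{k}q(4k).$$
   Context: This is the random access (RACH) model for CE group 0 in an NB-IoT network in the first time slot; group-0 devices use path-loss inversion power control with target $\rho$. The RACH attempt of the typical device succeeds iff its preamble is successfully received in at least one repetition and no intra-cell device using the same preamble is also successfully received (no collision). - Base stations form a PPP of intensity $\lambda_B$. - $\lambda_0^a=\lambda_0/S_0$ is the intensity of group-0 devices choosing a given preamble among $S_0$ preambles. - $\mathcal{A}_0^1$ is the probability that a device's buffer is non-empty, and $\mathcal{R}_0^1$ the probability that it is not restricted by the access scheme. - $\gamma(a,b)$ is the lower incomplete gamma function. *)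

(* Defs.v *)
From HB Require Import structures.
From mathcomp Require Import all_boot all_order all_algebra.
From mathcomp Require Import all_classical all_reals all_analysis.
Set Implicit Arguments. Unset Strict Implicit. Unset Printing Implicit Defensive.
Import Order.TTheory GRing.Theory Num.Theory.
Local Open Scope classical_set_scope.
Local Open Scope ring_scope.

Section defs.
Variable R : realType.

Definition Gammaf (x : R) : R :=
  fine (\int[@lebesgue_measure R]_(t in `[0%R, +oo[%classic)
          ((t `^ (x - 1)) * expR (- t))%:E)%E.

(* lower incomplete gamma: gamma(s,b) = int_0^b t^(s-1) e^(-t) dt *)
Definition lgamma (s b : R) : R :=
  fine (\int[@lebesgue_measure R]_(t in `[0%R, b]%classic)
          ((t `^ (s - 1)) * expR (- t))%:E)%E.

Definition F0 (alpha gth : R) (l : nat) : R :=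
  fine (\int[@lebesgue_measure R]_(y in `[(gth `^ (- alpha^-1))%R, +oo[%classic)
          ((1 - (1 / (1 + y `^ (- alpha))) ^+ l) * y)%:E)%E.

Definition qL (alpha rho Pw lamB gth sigma2 a lam0a : R) (l : nat) : R :=
  let u := pi * lamB * (Pw / rho) `^ (2 / alpha) in
  expR (- (l%:R * gth * sigma2 / rho)
        - (2 * gth `^ (2 / alpha) * a * lam0a * lgamma 2 u)
          / (lamB * (1 - expR (- u))) * F0 alpha gth l).

Definition cst : R := 3575%:R / 1000%:R.

Definition pmfN0 (a lam0a lamB : R) (n : nat) : R :=
  let c := cst in
  let r := a * lam0a / lamB in
  (c `^ (c + 1) * Gammaf (n%:R + c + 1) * r ^+ n)
  / (Gammaf (c + 1) * Gammaf (n%:R + 1) * (r + c) `^ (n%:R + c + 1)).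

End defs.

(* Main.v *)
Require Import Defs.
From HB Require Import structures.
From mathcomp Require Import all_boot all_order all_algebra.
From mathcomp Require Import all_classical all_reals all_analysis.
Import Order.TTheory GRing.Theory Num.Theory numFieldNormedType.Exports.
Local Open Scope classical_set_scope.
Local Open Scope ring_scope.

Theorem theorem1 (R : realType) (alpha rho Pw lamB gth sigma2 a lam0a : R)
  (K0 : nat) (d : measure_display) (T : measurableType d)
  (P : probability T R) (theta : nat -> 'I_K0 -> set T) :
  2 < alpha -> 0 < rho -> 0 < Pw -> 0 < lamB -> 0 < gth -> 0 <= sigma2 ->
  0 < a <= 1 -> 0 < lam0a -> (K0 = 1 \/ K0 = 2)%N ->
  (forall m k, measurable (theta m k)) ->
  (forall (m : nat) (S : {set 'I_K0}), S != finset.set0 ->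
     P [set x | forall k : 'I_K0, k \in S -> theta m k x] =
     (qL alpha rho Pw lamB gth sigma2 a lam0a (4 * #|S|))%:E) ->
  let PS := fun m : nat => fine (P [set x | exists k : 'I_K0, theta m k x]) in
  let Theta0 : R := \sum_(1 <= k < K0.+1)
      (-1) ^+ k.+1 * 'C(K0, k)%:R * qL alpha rho Pw lamB gth sigma2 a lam0a (4 * k) in
  limn (series (fun n : nat => (pmfN0 a lam0a lamB n * PS 0%N *
                          \prod_(1 <= m < n.+1) (1 - PS m) : R)))
  = limn (series (fun n : nat => (pmfN0 a lam0a lamB n * Theta0 * (1 - Theta0) ^+ n : R))).
Proof.
move=> _ _ _ _ _ _ _ _ HK Hmeas HP PS Theta0.
set q := qL alpha rho Pw lamB gth sigma2 a lam0a.
have HPS : forall m, PS m = Theta0.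
  move=> m; rewrite /PS /Theta0.
  case: HK => ?; subst K0.
  - have -> : [set x | exists k : 'I_1, theta m k x] =
              [set x | forall k : 'I_1, k \in (finset.set1 ord0) -> theta m k x].
      apply/seteqP; split => x /=.
      + by move=> [k Hk] j _; rewrite (ord1 j) -(ord1 k).
      + by move=> H; exists ord0; apply: H; rewrite !inE.
    rewrite HP; last by apply/set0Pn; exists ord0; rewrite !inE.
    by rewrite cards1 /= big_nat1 expr2 mulrNN !mul1r.
  - set A := theta m ord0. set B := theta m ord_max.
    have -> : [set x | exists k : 'I_2, theta m k x] = A `|` B.
      apply/seteqP; split => x /=.
      + move=> [k Hk]; case: k Hk => [[|[|k]] Hk] //= Hx.
        * by left; rewrite /A (_ : ord0 = Ordinal Hk) //; apply: val_inj.
        * by right; rewrite /B (_ : ord_max = Ordinal Hk) //; apply: val_inj.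
      + by case => Hx; [exists ord0 | exists ord_max].
    have HA : P A = (q 4)%:E.
      have -> : A = [set x | forall k : 'I_2, k \in (finset.set1 ord0) -> theta m k x].
        apply/seteqP; split => x /=.
        + by move=> Hx j; rewrite !inE => /eqP ->.
        + by move=> H; apply: H; rewrite !inE.
      by rewrite HP ?cards1 //; apply/set0Pn; exists ord0; rewrite !inE.
    have HB : P B = (q 4)%:E.
      have -> : B = [set x | forall k : 'I_2, k \in (finset.set1 ord_max) -> theta m k x].
        apply/seteqP; split => x /=.
        + by move=> Hx j; rewrite !inE => /eqP ->.
        + by move=> H; apply: H; rewrite !inE.
      by rewrite HP ?cards1 //; apply/set0Pn; exists ord_max; rewrite !inE.
    have HAB : P (A `&` B) = (q 8)%:E.
      have -> : A `&` B = [set x | forall k : 'I_2, k \in (finset.setT : {set 'I_2}) -> theta m k x].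
        apply/seteqP; split => x /=.
        + move=> [HAx HBx] j _; case: j => [[|[|j]] Hj] //=.
          * by rewrite /A (_ : ord0 = Ordinal Hj) // in HAx; apply: val_inj.
          * by rewrite /B (_ : ord_max = Ordinal Hj) // in HBx; apply: val_inj.
        + by move=> H; split; apply: H; rewrite !inE.
      rewrite HP ?cardsT ?card_ord //; apply/set0Pn; exists ord0; by rewrite !inE.
    have HU : P (A `|` B) = (P A + P B - P (A `&` B))%E.
      apply: measureUfinl; try (exact: Hmeas). apply: (@le_lt_trans _ _ 1%E); [apply: probability_le1; exact: Hmeas | exact: ltry].
    rewrite HU HA HB HAB.

    rewrite /= big_nat_recr //= big_nat1 /q.
    rewrite muln1 (_ : (4 * 2 = 8)%N) //.
    rewrite (_ : 'C(2, 1)%:R = 2 :> R) // (_ : 'C(2, 2)%:R = 1 :> R) //.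
    rewrite !exprS expr0 !mulr1 !mulN1r opprK !mul1r.
    by rewrite mulN1r -[2]/(1 + 1) mulrDl mul1r.
rewrite (_ : (fun n : nat => pmfN0 a lam0a lamB n * PS 0%N * \prod_(1 <= m < n.+1) (1 - PS m))
  = (fun n => pmfN0 a lam0a lamB n * Theta0 * (1 - Theta0) ^+ n)) //.
apply/funext => n.
rewrite HPS.
under eq_bigr do rewrite HPS.
by rewrite prodr_const_nat subSS subn0.
Qed.
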